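(* For all $M\geq 2$: (1) $g(M)=F_M+\sum_{k=1}^{M-1}F_kF_{M-k}$; (2) $h(M)=F_M+\sum_{k=1}^{M-2}F_kF_{M-1-k}$; (3) $g_1(M)=h_1(M)=\sum_{k=1}^{M-1}F_kF_{M-k}$; (4) $g(M)-h(M)=g_1(M)-g_1(M-1)=h_1(M)-h_1(M-1)=F_{M-1}+\sum_{k=1}^{M-3}F_kF_{M-2-k}$ (with $g_1(0)=h_1(0)=0$ if needed, and empty sums equal to $0$).
   Context: $F_k$ denotes the Fibonacci numbers with $F_{-1}=1$, $F_0=0$, $F_1=1$, $F_k=F_{k-1}+F_{k-2}$. The perimeter of a nonempty partition $\lambda$ with largest part $\lambda_1$ and $\ell(\lambda)$ parts is $\lambda_1+\ell(\lambda)-1$. $\mathcal G(M)$ is the set of partitions into odd parts with perimeter $M$, $\mathcal H(M)$ the set of partitions into distinct parts with perimeter $M$; $g(M)$ (resp. $h(M)$) is the total number of parts, summed over all partitions in $\mathcal G(M)$ (resp. $\mathcal H(M)$). $\mathcal G_1(M)$ is the set of partitions with perimeter $M$ in which exactly one distinct even integer occurs as a part (possibly with multiplicity greater than one) and all other parts are odd; $\mathcal H_1(M)$ is the set of partitions with perimeter $M$ in which exactly one part value occurs at least twice and every other part value occurs exactly once. $g_1(M)=|\mathcal G_1(M)|$, $h_1(M)=|\mathcal H_1(M)|$. *)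

(* Defs.v *)
From mathcomp Require Import all_boot all_order all_algebra.
Set Implicit Arguments. Unset Strict Implicit. Unset Printing Implicit Defensive.

Fixpoint fib (n : nat) : nat :=
  match n with
  | 0 => 0
  | 1 => 1
  | (m.+1 as n').+1 => fib n' + fib m
  end.

Definition is_partition (s : seq nat) : bool :=
  sorted geq s && all (fun x => 0 < x) s.

Definition perimeter (s : seq nat) : nat := (head 0 s + size s).-1.

(* All sequences of length <= n with entries in [0, k]
   (a finite superset of all partitions of perimeter <= min n k). *)
Fixpoint all_seqs (n k : nat) : seq (seq nat) :=
  match n with
  | 0 => [:: [::]]
  | n'.+1 => [::] :: [seq x :: t | x <- iota 0 k.+1, t <- all_seqs n' k]
  end.

(* Nonempty partitions with perimeter M satisfying P (a partition with
   perimeter M has at most M parts, each at most M). *)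
Definition parts_perim (P : pred (seq nat)) (M : nat) : seq (seq nat) :=
  [seq s <- undup (all_seqs M M) |
     [&& is_partition s, s != [::], perimeter s == M & P s]].

Definition Gset (M : nat) := parts_perim (fun s => all odd s) M.
Definition Hset (M : nat) := parts_perim (fun s => uniq s) M.
Definition G1set (M : nat) :=
  parts_perim (fun s => size (undup [seq x <- s | ~~ odd x]) == 1) M.
Definition H1set (M : nat) :=
  parts_perim (fun s => size [seq x <- undup s | 1 < count_mem x s] == 1) M.

Definition g (M : nat) : nat := sumn [seq size s | s <- Gset M].
Definition h (M : nat) : nat := sumn [seq size s | s <- Hset M].
Definition g1 (M : nat) : nat := size (G1set M).
Definition h1 (M : nat) : nat := size (H1set M).

(* Main.v *)
Require Import Defs.
From mathcomp Require Import all_boot all_order all_algebra.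
From mathcomp Require Import zify.
Set Implicit Arguments. Unset Strict Implicit. Unset Printing Implicit Defensive.

Lemma geq_trans : transitive geq.
Proof. by move=> a b c h1 h2; apply: leq_trans h2 h1. Qed.

Lemma mem_all_seqs n k s : size s <= n -> all (fun x => x <= k) s -> s \in all_seqs n k.
Proof.
elim: n s => [|n IH] [|x t] Hs Ht; rewrite ?in_cons ?eqxx //.
apply/orP; right; case/andP: Ht => Hx Ht.
apply/flattenP; exists [seq x :: t0 | t0 <- all_seqs n k].
  by apply/mapP; exists x; rewrite ?mem_iota.
by apply: map_f; apply: IH.
Qed.

Lemma perim_cons a t : perimeter (a :: t) = a + size t.
Proof. by rewrite /perimeter /= addnS. Qed.

Lemma isp_cons_le a t x : is_partition (a :: t) -> x \in t -> x <= a.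
Proof.
case/andP=> /= /(order_path_min geq_trans) /allP H _ xt; exact: H.
Qed.

Lemma mem_PP P M s : (s \in parts_perim P M) = [&& is_partition s, s != [::], perimeter s == M & P s].
Proof.
rewrite mem_filter mem_undup.
case H: [&& _, _, _ & _] => //=.
case/and4P: H; case: s => [|a t] // Hp _; rewrite perim_cons => /eqP HM _.
have Ha : 0 < a by case/andP: Hp => _ /andP[].
apply: mem_all_seqs; first by rewrite /= -HM addnC -addn1 leq_add2l.
rewrite /= -HM leq_addr /=; apply/allP => x xt.
have := isp_cons_le Hp xt; move/leq_trans; apply; exact: leq_addr.
Qed.

Lemma PP_uniq P M : uniq (parts_perim P M).
Proof. by rewrite filter_uniq ?undup_uniq. Qed.

Lemma sorted_rcons t x : sorted geq (rcons t x) = sorted geq t && (x <= last x t).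
Proof. case: t => [|a t] /=; [by rewrite leqnn | by rewrite rcons_path]. Qed.

Lemma isp_rcons t x : is_partition (rcons t x) = [&& is_partition t, 0 < x & x <= last x t].
Proof.
rewrite /is_partition sorted_rcons all_rcons.
by case: (sorted _ _); case: (0 < x); case: (x <= _); case: (all _ _).
Qed.

Lemma perim_rcons t x : t != [::] -> perimeter (rcons t x) = (perimeter t).+1.
Proof. by case: t => [|a t] // _; rewrite rcons_cons !perim_cons size_rcons addnS. Qed.

Lemma sorted_add c t : sorted geq (map (addn c) t) = sorted geq t.
Proof.
case: t => [|a t] //=; rewrite path_map; apply: eq_path => x y /=.
by rewrite /geq /= leq_add2l.
Qed.

Lemma isp_add c t : 0 < c -> is_partition (map (addn c) t) = sorted geq t.
Proof.
move=> c0; rewrite /is_partition sorted_add.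
have -> : all (fun x => 0 < x) (map (addn c) t).
  by apply/allP => _ /mapP[x _ ->]; rewrite addn_gt0 c0.
by rewrite andbT.
Qed.

Lemma perim_add c t : t != [::] -> perimeter (map (addn c) t) = perimeter t + c.
Proof. by case: t => [|a t] // _; rewrite /= !perim_cons size_map; lia. Qed.

Lemma add_inv c s : all (fun x => c <= x) s -> s = map (addn c) (map (subn^~ c) s).
Proof. by elim: s => //= a t IH /andP[ha ht]; rewrite subnKC // -IH. Qed.

Lemma sorted_rcons_all t y : sorted geq (rcons t y) -> all (fun z => y <= z) t.
Proof.
elim: t => //= a t IH H.
have H1 := order_path_min geq_trans H.
rewrite all_rcons in H1; case/andP: H1 => ya _.
apply/andP; split; [exact: ya | apply: IH; exact: path_sorted H].
Qed.

Lemma uniq_cat2 (T : eqType) (A B : seq T) (d : pred T) :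
  uniq A -> uniq B -> all d A -> all (predC d) B -> uniq (A ++ B).
Proof.
move=> uA uB dA dB; rewrite cat_uniq uA uB andbT /=.
apply/hasPn => x xB; apply/negP => xA.
by move: (allP dA x xA) (allP dB x xB) => /= ->.
Qed.

Lemma sumn_size_rcons (A : seq (seq nat)) x :
  sumn [seq size s | s <- [seq rcons t x | t <- A]] = sumn [seq size s | s <- A] + size A.
Proof. by elim: A => //= a A ->; rewrite size_rcons addnS addSn addnA. Qed.

Lemma sumn_size_map (A : seq (seq nat)) (f : nat -> nat) :
  sumn [seq size s | s <- [seq map f t | t <- A]] = sumn [seq size s | s <- A].
Proof. by elim: A => //= a A ->; rewrite size_map. Qed.

Lemma last_pos t y : is_partition t -> t != [::] -> 0 < last y t.
Proof.
case/lastP: t => [|t z] // /[swap] _; rewrite isp_rcons last_rcons.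
by case/and3P.
Qed.

Lemma add_split c s : 0 < c -> is_partition s -> all (fun x => c < x) s ->
  exists2 u, s = map (addn c) u & is_partition u.
Proof.
move=> c0 Hs Ha; exists (map (subn^~ c) s).
  by apply: add_inv; apply: sub_all Ha => x /ltnW.
apply/andP; split.
  by rewrite -(sorted_add c) -add_inv; [case/andP: Hs | apply: sub_all Ha => x /ltnW].
by rewrite all_map; apply: sub_all Ha => x /=; rewrite subn_gt0.
Qed.

Lemma all_odd_add2 u : all odd (map (addn 2) u) = all odd u.
Proof. by elim: u => //= a u ->; rewrite negbK add0n. Qed.

Lemma rcons_nnil (t : seq nat) x : rcons t x != [::].
Proof. by case: t. Qed.

Lemma map_nnil (f : nat -> nat) t : (map f t != [::]) = (t != [::]).
Proof. by case: t. Qed.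

Lemma isp_sorted s : is_partition s -> sorted geq s.
Proof. by case/andP. Qed.

Lemma rcons_all_gt t y c : sorted geq (rcons t y) -> c < y -> all (fun x => c < x) (rcons t y).
Proof.
move=> Hs cy; rewrite all_rcons cy /=.
by apply: sub_all (sorted_rcons_all Hs) => x /(leq_trans cy).
Qed.

Lemma G_dec M : 3 <= M -> perm_eq (Gset M)
  ([seq rcons t 1 | t <- Gset M.-1] ++ [seq map (addn 2) t | t <- Gset M.-2]).
Proof.
move=> HM; apply: uniq_perm; first exact: PP_uniq.
  apply: (@uniq_cat2 _ _ _ (fun s : seq nat => 1 \in s)).
  - rewrite map_inj_uniq ?PP_uniq //; exact: rcons_injl.
  - rewrite map_inj_uniq ?PP_uniq //; move=> x1 x2; exact: (inj_map (@addnI 2)).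
  - by apply/allP => _ /mapP[t _ ->]; rewrite mem_rcons inE eqxx.
  - apply/allP => _ /mapP[t _ ->] /=; apply/mapP => -[x _ E]; lia.
move=> s; rewrite mem_cat /Gset !mem_PP; apply/idP/idP.
- case/lastP: s => [|t y]; first by case/and4P.
  case/and4P => /[dup] Hs; rewrite isp_rcons => /and3P[Ht Hy Hyl] _ /eqP Hper.
  rewrite all_rcons => /andP[Hyo Hto].
  case: (eqVneq y 1) => [Ey|Ny].
    subst y; have tn : t != [::] by apply/eqP => Et; move: Hper HM; rewrite Et => <-.
    apply/orP; left; apply: map_f; rewrite mem_PP Ht tn Hto andbT /=.
    by move: Hper; rewrite perim_rcons // => <-.
  have y2 : 2 < y by clear -Hy Ny Hyo; case: y Hy Ny Hyo => [|[|[|y]]].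
  have [u Eu Hu] := add_split (erefl : 0 < 2) Hs (rcons_all_gt (isp_sorted Hs) y2).
  apply/orP; right; rewrite Eu; apply: map_f.
  have un : u != [::] by rewrite -(map_nnil (addn 2)) -Eu rcons_nnil.
  rewrite mem_PP Hu un -all_odd_add2 -Eu all_rcons Hyo Hto andbT /=.
  move: Hper; rewrite Eu perim_add // => <-; by rewrite addn2 /= eqxx.
- case/orP => /mapP[t Ht ->]; rewrite mem_PP in Ht; case/and4P: Ht => Hp tn /eqP Hpe Ho.
    rewrite isp_rcons Hp rcons_nnil perim_rcons // Hpe prednK; last by lia.
    by rewrite all_rcons Ho last_pos //= eqxx.
  rewrite isp_add // (isp_sorted Hp) map_nnil tn perim_add // Hpe all_odd_add2 Ho andbT /=.
  rewrite eqn_leq; apply/andP; split; lia.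
Qed.

Lemma size_map_eq (A : seq (seq nat)) (f : seq nat -> seq nat) : size (map f A) = size A.
Proof. exact: size_map. Qed.

Lemma isp_pos s : is_partition s -> all (fun x => 0 < x) s.
Proof. by case/andP. Qed.

Lemma notin_add c t : all (fun x => 0 < x) t -> c \notin map (addn c) t.
Proof. move=> Ht; apply/mapP => -[x xt E]; have := allP Ht x xt; lia. Qed.

Lemma last_add_ge c t x : c <= x -> c <= last x (map (addn c) t).
Proof. by move=> cx; case/lastP: t => [|t z] //; rewrite map_rcons last_rcons leq_addr. Qed.

Lemma H_dec M : 3 <= M -> perm_eq (Hset M)
  ([seq map (addn 1) t | t <- Hset M.-1] ++ [seq rcons (map (addn 1) t) 1 | t <- Hset M.-2]).
Proof.
move=> HM; apply: uniq_perm; first exact: PP_uniq.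
  apply: (@uniq_cat2 _ _ _ (fun s : seq nat => 1 \notin s)).
  - rewrite map_inj_uniq ?PP_uniq //; move=> x1 x2; exact: (inj_map (@addnI 1)).
  - rewrite map_inj_uniq ?PP_uniq // => x1 x2 E; apply: (inj_map (@addnI 1)); exact: rcons_injl E.
  - apply/allP => _ /mapP[t Ht ->]; rewrite mem_PP in Ht; case/and4P: Ht => Hp _ _ _.
    exact: notin_add (isp_pos Hp).
  - by apply/allP => _ /mapP[t _ ->]; rewrite /= mem_rcons inE eqxx.
move=> s; rewrite mem_cat /Hset !mem_PP; apply/idP/idP.
- case/lastP: s => [|t y]; first by case/and4P.
  case/and4P => /[dup] Hs; rewrite isp_rcons => /and3P[Ht Hy Hyl] _ /eqP Hper.
  rewrite rcons_uniq => /andP[Hyn Htu].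
  case: (eqVneq y 1) => [Ey|Ny].
    subst y; have tn : t != [::] by apply/eqP => Et; move: Hper HM; rewrite Et => <-.
    have Ht1 : all (fun x => 1 < x) t.
      apply/allP => x xt; have := allP (sorted_rcons_all (isp_sorted Hs)) x xt.
      rewrite leq_eqVlt; case/orP => // /eqP E; by move: Hyn; rewrite E xt.
    have [u Eu Hu] := add_split (erefl : 0 < 1) Ht Ht1.
    apply/orP; right; rewrite Eu; apply: map_f.
    have un : u != [::] by rewrite -(map_nnil (addn 1)) -Eu.
    rewrite mem_PP Hu un -(map_inj_uniq (@addnI 1)) -Eu Htu andbT /=.
    by move: Hper; rewrite perim_rcons // Eu perim_add // => <-; rewrite addn1 /= eqxx.
  have y2 : 1 < y by clear -Hy Ny; case: y Hy Ny => [|[|y]].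
  have [u Eu Hu] := add_split (erefl : 0 < 1) Hs (rcons_all_gt (isp_sorted Hs) y2).
  apply/orP; left; rewrite Eu; apply: map_f.
  have un : u != [::] by rewrite -(map_nnil (addn 1)) -Eu rcons_nnil.
  rewrite mem_PP Hu un -(map_inj_uniq (@addnI 1)) -Eu rcons_uniq Hyn Htu andbT /=.
  by move: Hper; rewrite Eu perim_add // => <-; rewrite addn1 /= eqxx.
- case/orP => /mapP[t Ht ->]; rewrite mem_PP in Ht; case/and4P: Ht => Hp tn /eqP Hpe Ho.
    rewrite isp_add // (isp_sorted Hp) map_nnil tn perim_add // Hpe (map_inj_uniq (@addnI 1)) Ho.
    rewrite andbT /=; apply/eqP; lia.
  rewrite isp_rcons isp_add // (isp_sorted Hp) last_add_ge // rcons_nnil.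
  rewrite perim_rcons ?map_nnil // perim_add // Hpe rcons_uniq (map_inj_uniq (@addnI 1)) Ho.
  rewrite notin_add ?isp_pos //= andbT; apply/eqP; lia.
Qed.

Lemma sumn_size_rcons_map (A : seq (seq nat)) (f : nat -> nat) x :
  sumn [seq size s | s <- [seq rcons (map f t) x | t <- A]] = sumn [seq size s | s <- A] + size A.
Proof. by elim: A => //= a A ->; rewrite size_rcons size_map addnS addSn addnA. Qed.

Definition P1 (s : seq nat) := size (undup [seq x <- s | ~~ odd x]) == 1.
Definition Eset M := parts_perim (fun s => P1 s && (last 0 s == 2)) M.

Lemma P1_rcons1 t : P1 (rcons t 1) = P1 t.
Proof. by rewrite /P1 filter_rcons. Qed.

Lemma P1_add2 u : P1 (map (addn 2) u) = P1 u.
Proof.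
rewrite /P1 filter_map undup_map_inj ?size_map; last exact: addnI.
congr (size (undup _) == 1); apply: eq_filter => x /=.
by rewrite /preim /= oddD /= negbK.
Qed.

Lemma size_undup_rcons_in (l : seq nat) x : x \in l -> size (undup (rcons l x)) = size (undup l).
Proof.
move=> xl; apply: perm_size; apply: uniq_perm; rewrite ?undup_uniq // => z.
by rewrite !mem_undup mem_rcons inE; case: eqVneq => // ->.
Qed.

Lemma P1_rcons2 t : 2 \in t -> P1 (rcons t 2) = P1 t.
Proof. by move=> Ht; rewrite /P1 filter_rcons /= size_undup_rcons_in // mem_filter. Qed.

Lemma filter_even_nil u : all odd u -> [seq x <- u | ~~ odd x] = [::].
Proof. by elim: u => //= a u IH /andP[-> /IH ->]. Qed.

Lemma P1_oddrcons2 u : all odd u -> P1 (rcons u 2).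
Proof. by move=> Hu; rewrite /P1 filter_rcons /= filter_even_nil. Qed.

Lemma size1_eq (l : seq nat) a b : size l == 1 -> a \in l -> b \in l -> a = b.
Proof. by case: l => [|c [|]] //= _; rewrite !inE => /eqP -> /eqP ->. Qed.

Lemma last_min t x y : sorted geq t -> x \in t -> last y t <= x.
Proof.
case/lastP: t => [|t z] // Hs; rewrite last_rcons mem_rcons inE => /orP[/eqP ->//|xt].
exact: (allP (sorted_rcons_all Hs)).
Qed.

Lemma last_def (t : seq nat) x y : t != [::] -> last x t = last y t.
Proof. by case/lastP: t => [|t z] //; rewrite !last_rcons. Qed.

Lemma count_rcons2 (t : seq nat) x y : count_mem x (rcons t y) = count_mem x t + (y == x).
Proof. by rewrite -cats1 count_cat /= addn0. Qed.

Lemma E_dec M : 4 <= M -> perm_eq (Eset M)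
  ([seq rcons t 2 | t <- Eset M.-1] ++ [seq rcons (map (addn 2) t) 2 | t <- Gset (M - 3)]).
Proof.
move=> HM; apply: uniq_perm; first exact: PP_uniq.
  apply: (@uniq_cat2 _ _ _ (fun s : seq nat => 1 < count_mem 2 s)).
  - rewrite map_inj_uniq ?PP_uniq //; exact: rcons_injl.
  - rewrite map_inj_uniq ?PP_uniq // => x1 x2 E; apply: (inj_map (@addnI 2)); exact: rcons_injl E.
  - apply/allP => _ /mapP[t Ht ->]; rewrite mem_PP in Ht; case/and4P: Ht => Hp tn _ /andP[_ /eqP Hl].
    rewrite /= count_rcons2 eqxx addn1 ltnS lt0n; apply/eqP/count_memPn.
    by move: tn Hl; case/lastP: t {Hp} => [|t z] // _; rewrite last_rcons mem_rcons inE => ->.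
  - apply/allP => _ /mapP[t Ht ->]; rewrite mem_PP in Ht; case/and4P: Ht => Hp tn _ Ho.
    rewrite /= count_rcons2 eqxx addn1 ltnS lt0n negbK; apply/eqP/count_memPn/mapP => -[z zt E].
    have := allP Ho z zt; have -> : z = 0 by lia.
    done.
move=> s; rewrite mem_cat /Eset /Gset !mem_PP; apply/idP/idP.
- case/lastP: s => [|t y]; first by case/and4P.
  case/and4P => /[dup] Hs; rewrite isp_rcons => /and3P[Ht Hy Hyl] _ /eqP Hper.
  rewrite last_rcons => /andP[HP /eqP Ey]; subst y.
  have tn : t != [::] by apply/eqP => Et; move: Hper HM; rewrite Et => <-.
  have Per : perimeter t = M.-1 by move: Hper; rewrite perim_rcons // => <-.
  have Ht2 := sorted_rcons_all (isp_sorted Hs).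
  case: (boolP (2 \in t)) => H2.
    apply/orP; left; apply: map_f; rewrite mem_PP Ht tn Per eqxx -P1_rcons2 // HP /=.
    rewrite eqn_leq (last_min _ (isp_sorted Ht) H2) /=.
    by rewrite (last_def _ 2 tn).
  have Ht3 : all (fun x => 2 < x) t.
    apply/allP => x xt; have := allP Ht2 x xt; rewrite leq_eqVlt; case/orP => // /eqP E.
    by move: H2; rewrite E xt.
  have Hto : all odd t.
    apply/allP => x xt; apply/negPn/negP => Hx.
    have E : x = 2.
      apply: (size1_eq HP); rewrite mem_undup mem_filter ?Hx ?mem_rcons ?inE ?xt ?orbT //.
    by move: H2; rewrite -E xt.
  have [u Eu Hu] := add_split (erefl : 0 < 2) Ht Ht3.
  apply/orP; right; rewrite Eu; apply: map_f.
  have un : u != [::] by rewrite -(map_nnil (addn 2)) -Eu.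
  rewrite mem_PP Hu un -all_odd_add2 -Eu Hto andbT /=.
  move: Per; rewrite Eu perim_add // => E; apply/eqP; lia.
- case/orP => /mapP[t Ht ->]; rewrite mem_PP in Ht.
    case/and4P: Ht => Hp tn /eqP Hpe /andP[HP /eqP Hl].
    have H2 : 2 \in t by move: tn Hl; case/lastP: t {Hp HP Hpe} => [|t z] // _; rewrite last_rcons mem_rcons inE => ->.
    rewrite isp_rcons Hp (last_def _ 0 tn) Hl leqnn rcons_nnil perim_rcons // Hpe.
    rewrite P1_rcons2 // HP last_rcons eqxx /= andbT; apply/eqP; lia.
  case/and4P: Ht => Hp tn /eqP Hpe Ho.
  rewrite isp_rcons isp_add // (isp_sorted Hp) last_add_ge // rcons_nnil.
  rewrite perim_rcons ?map_nnil // perim_add // Hpe P1_oddrcons2 ?all_odd_add2 //.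
  rewrite last_rcons eqxx /= andbT; apply/eqP; lia.
Qed.

Lemma E_mem_ge2 s : is_partition s -> last 0 s == 2 -> all (fun x => 1 < x) s.
Proof.
case/lastP: s => [|t y] // /isp_sorted Hs; rewrite last_rcons => /eqP Ey; subst y.
by rewrite all_rcons /=; exact: sorted_rcons_all Hs.
Qed.

Lemma G1_dec M : 3 <= M -> perm_eq (G1set M)
  ([seq rcons t 1 | t <- G1set M.-1] ++ ([seq map (addn 2) t | t <- G1set M.-2] ++ Eset M)).
Proof.
move=> HM; apply: uniq_perm; first exact: PP_uniq.
  apply: (@uniq_cat2 _ _ _ (fun s : seq nat => 1 \in s)).
  - rewrite map_inj_uniq ?PP_uniq //; exact: rcons_injl.
  - apply: (@uniq_cat2 _ _ _ (fun s : seq nat => 2 \notin s)).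
    + rewrite map_inj_uniq ?PP_uniq //; move=> x1 x2; exact: (inj_map (@addnI 2)).
    + exact: PP_uniq.
    + apply/allP => _ /mapP[t Ht ->]; rewrite mem_PP in Ht; case/and4P: Ht => Hp _ _ _.
      exact: notin_add (isp_pos Hp).
    + apply/allP => s; rewrite mem_PP => /and4P[_ _ _ /andP[_ Hl]] /=; rewrite negbK.
      by move: Hl; case/lastP: s => [|t z] //; rewrite last_rcons => /eqP ->; rewrite mem_rcons inE eqxx.
  - by apply/allP => _ /mapP[t _ ->]; rewrite mem_rcons inE eqxx.
  - apply/allP => s; rewrite mem_cat => /orP[/mapP[t _ ->]|].
      by apply/mapP => -[x _ E]; lia.
    rewrite mem_PP => /and4P[Hp _ _ /andP[_ Hl]] /=; apply/negP => H1.
    by have := allP (E_mem_ge2 Hp Hl) 1 H1.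
move=> s; rewrite !mem_cat /Eset /G1set !mem_PP; apply/idP/idP.
- case/lastP: s => [|t y]; first by case/and4P.
  case/and4P => /[dup] Hs; rewrite isp_rcons => /and3P[Ht Hy Hyl] Hn /eqP Hper HP.
  have {}HP : P1 (rcons t y) := HP.
  case: (eqVneq y 1) => [Ey|Ny].
    subst y; have tn : t != [::] by apply/eqP => Et; move: Hper HM; rewrite Et => <-.
    apply/orP; left; apply: map_f; rewrite mem_PP Ht tn -/(P1 t) -P1_rcons1 HP andbT /=.
    by move: Hper; rewrite perim_rcons // => <-.
  case: (eqVneq y 2) => [Ey|Ny2].
    subst y; apply/orP; right; apply/orP; right.
    by rewrite Ht Hyl Hn Hper eqxx HP last_rcons eqxx.
  have y2 : 2 < y by clear -Hy Ny Ny2; case: y Hy Ny Ny2 => [|[|[|y]]].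
  have [u Eu Hu] := add_split (erefl : 0 < 2) Hs (rcons_all_gt (isp_sorted Hs) y2).
  apply/orP; right; apply/orP; left; rewrite Eu; apply: map_f.
  have un : u != [::] by rewrite -(map_nnil (addn 2)) -Eu rcons_nnil.
  rewrite mem_PP Hu un -/(P1 u) -P1_add2 -Eu HP andbT /=.
  by move: Hper; rewrite Eu perim_add // => <-; rewrite addn2 /= eqxx.
- case/orP => [/mapP[t Ht ->]|/orP[/mapP[t Ht ->]|]].
  + rewrite mem_PP in Ht; case/and4P: Ht => Hp tn /eqP Hpe Ho.
    rewrite isp_rcons Hp /= rcons_nnil perim_rcons // Hpe prednK; last by lia.
    have := P1_rcons1 t; rewrite /P1 => ->; by rewrite Ho last_pos //= eqxx.
  + rewrite mem_PP in Ht; case/and4P: Ht => Hp tn /eqP Hpe Ho.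
    rewrite isp_add // (isp_sorted Hp) map_nnil tn perim_add // Hpe.
    have := P1_add2 t; rewrite /P1 => ->; rewrite Ho andbT /=.
    rewrite eqn_leq; apply/andP; split; lia.
  + by case/and4P => -> -> -> /andP[HP _].
Qed.

Definition P2 (s : seq nat) := size [seq x <- undup s | 1 < count_mem x s] == 1.
Definition Cset M := parts_perim (fun s => P2 s && (1 < count_mem 1 s)) M.

Lemma count_rconsG (a : pred nat) l x : count a (rcons l x) = count a l + a x.
Proof. by rewrite -cats1 count_cat /= addn0. Qed.

Lemma P2_add1 u : P2 (map (addn 1) u) = P2 u.
Proof.
rewrite /P2 undup_map_inj; last exact: addnI.
rewrite filter_map size_map; congr (size _ == 1); apply: eq_filter => x /=.
rewrite /preim /= count_map; congr (1 < _); apply: eq_count => z /=.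
Qed.

Lemma P2_rcons_new t x : x \notin t -> P2 (rcons t x) = P2 t.
Proof.
move=> xt; rewrite /P2 !size_filter.
have Hp : perm_eq (undup (rcons t x)) (rcons (undup t) x).
  apply: uniq_perm; rewrite ?undup_uniq ?rcons_uniq ?mem_undup ?xt ?undup_uniq // => z.
  by rewrite mem_undup !mem_rcons !inE mem_undup.
rewrite ((permP Hp) _) count_rconsG /= count_rcons2 eqxx.
move/count_memPn: (xt) => ->; rewrite add0n /= addn0.
congr (_ == 1); apply: eq_in_count => z; rewrite mem_undup => zt.
rewrite count_rcons2; case: eqVneq => [E|]; last by rewrite addn0.
by move: xt; rewrite E zt.
Qed.

Lemma P2_rcons_rep t x : x \in t -> count_mem x t != 1 -> P2 (rcons t x) = P2 t.
Proof.
move=> xt cx; rewrite /P2 !size_filter.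
have Hp : perm_eq (undup (rcons t x)) (undup t).
  apply: uniq_perm; rewrite ?undup_uniq // => z.
  by rewrite !mem_undup mem_rcons inE; case: eqVneq => // ->.
rewrite ((permP Hp) _); congr (_ == 1); apply: eq_in_count => z _ /=.
rewrite count_rcons2; case: eqVneq => [E|]; last by rewrite addn0.
by rewrite -E addn1; move: cx; case: (count_mem x t) => [|[|n]].
Qed.

Lemma uniq_count1 (t : seq nat) : (forall z, z \in t -> count_mem z t <= 1) -> uniq t.
Proof.
elim: t => //= a t IH H; apply/andP; split.
  by have := H a (mem_head _ _); rewrite eqxx add1n ltnS leqn0 => /eqP/count_memPn.
apply: IH => z zt; have := H z (mem_behead (s := a :: t) zt); exact: leq_trans (leq_addl _ _).
Qed.

Lemma P2_C2 t : 1 \notin t -> P2 (rcons (rcons t 1) 1) = uniq t.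
Proof.
move=> Ht; rewrite /P2 size_filter.
have Hp : perm_eq (undup (rcons (rcons t 1) 1)) (1 :: undup t).
  apply: uniq_perm; rewrite ?undup_uniq //= ?undup_uniq ?mem_undup ?Ht // => z.
  by rewrite mem_undup !mem_rcons !inE mem_undup mem_rcons inE orbA orbb.
have c1 : count_mem 1 t = 0 by apply/count_memPn.
rewrite ((permP Hp) _) /= !count_rcons2 c1 eqxx /= add1n eqSS.
have E : forall z, z \in t -> count_mem z (rcons (rcons t 1) 1) = count_mem z t.
  move=> z zt; rewrite !count_rcons2; case: eqVneq => [E|]; first by move: Ht; rewrite E zt.
  by rewrite !addn0.
apply/idP/idP.
  move=> H0; apply: uniq_count1 => z zt; rewrite -E // leqNgt; apply/negP => Hz.
  move: H0; rewrite eqn0Ngt -has_count => /negP; apply; apply/hasP; exists z => //.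
  by rewrite mem_undup.
move=> Hu; rewrite eqn0Ngt -has_count; apply/hasP => -[z]; rewrite mem_undup => zt /=.
by rewrite E // count_uniq_mem // zt.
Qed.

Lemma last1 s : is_partition s -> 1 \in s -> exists t, s = rcons t 1.
Proof.
case/lastP: s => [|t y] // Hs H1; exists t; congr rcons.
have := last_min 0 (isp_sorted Hs) H1; rewrite last_rcons.
move: Hs; rewrite isp_rcons => /and3P[_ Hy _]; lia.
Qed.

Lemma H1_dec M : 3 <= M -> perm_eq (H1set M)
  ([seq map (addn 1) t | t <- H1set M.-1] ++
   ([seq rcons (map (addn 1) t) 1 | t <- H1set M.-2] ++ Cset M)).
Proof.
move=> HM; apply: uniq_perm; first exact: PP_uniq.
  apply: (@uniq_cat2 _ _ _ (fun s : seq nat => 1 \notin s)).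
  - rewrite map_inj_uniq ?PP_uniq //; move=> x1 x2; exact: (inj_map (@addnI 1)).
  - apply: (@uniq_cat2 _ _ _ (fun s : seq nat => count_mem 1 s <= 1)).
    + rewrite map_inj_uniq ?PP_uniq // => x1 x2 E; apply: (inj_map (@addnI 1)); exact: rcons_injl E.
    + exact: PP_uniq.
    + apply/allP => _ /mapP[t Ht ->]; rewrite mem_PP in Ht; case/and4P: Ht => Hp _ _ _.
      by rewrite /= count_rcons2 eqxx addn1 ltnS leqn0; apply/eqP/count_memPn; exact: notin_add (isp_pos Hp).
    + apply/allP => s; rewrite mem_PP => /and4P[_ _ _ /andP[_ Hl]] /=; by rewrite -ltnNge.
  - apply/allP => _ /mapP[t Ht ->]; rewrite mem_PP in Ht; case/and4P: Ht => Hp _ _ _.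
    exact: notin_add (isp_pos Hp).
  - apply/allP => s; rewrite mem_cat => /orP[/mapP[t _ ->]|] /=.
      by rewrite negbK mem_rcons inE eqxx.
    rewrite mem_PP => /and4P[_ _ _ /andP[_ Hl]]; rewrite negbK; apply/count_memPn; lia.
move=> s; rewrite !mem_cat /Cset /H1set !mem_PP; apply/idP/idP.
- case/lastP: s => [|t y]; first by case/and4P.
  case/and4P => /[dup] Hs; rewrite isp_rcons => /and3P[Ht Hy Hyl] Hn /eqP Hper HP.
  have {}HP : P2 (rcons t y) := HP.
  case: (eqVneq y 1) => [Ey|Ny].
    subst y; case: (boolP (1 \in t)) => H1.
      apply/orP; right; apply/orP; right.
      rewrite Ht Hyl Hn Hper eqxx HP /= count_rcons2 eqxx addn1 ltnS lt0n.
      by apply/eqP/count_memPn.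
    have tn : t != [::] by apply/eqP => Et; move: Hper HM; rewrite Et => <-.
    have Ht1 : all (fun x => 1 < x) t.
      apply/allP => x xt; have := allP (sorted_rcons_all (isp_sorted Hs)) x xt.
      rewrite leq_eqVlt; case/orP => // /eqP E; by move: H1; rewrite E xt.
    have [u Eu Hu] := add_split (erefl : 0 < 1) Ht Ht1.
    apply/orP; right; apply/orP; left; rewrite Eu; apply: map_f.
    have un : u != [::] by rewrite -(map_nnil (addn 1)) -Eu.
    rewrite mem_PP Hu un -/(P2 u) -P2_add1 -Eu -(P2_rcons_new H1) HP andbT /=.
    by move: Hper; rewrite perim_rcons // Eu perim_add // => <-; rewrite addn1 /= eqxx.
  have y2 : 1 < y by clear -Hy Ny; case: y Hy Ny => [|[|y]].
  have [u Eu Hu] := add_split (erefl : 0 < 1) Hs (rcons_all_gt (isp_sorted Hs) y2).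
  apply/orP; left; rewrite Eu; apply: map_f.
  have un : u != [::] by rewrite -(map_nnil (addn 1)) -Eu rcons_nnil.
  rewrite mem_PP Hu un -/(P2 u) -P2_add1 -Eu HP andbT /=.
  by move: Hper; rewrite Eu perim_add // => <-; rewrite addn1 /= eqxx.
- case/orP => [/mapP[t Ht ->]|/orP[/mapP[t Ht ->]|]].
  + rewrite mem_PP in Ht; case/and4P: Ht => Hp tn /eqP Hpe Ho.
    rewrite isp_add // (isp_sorted Hp) map_nnil tn perim_add // Hpe.
    have := P2_add1 t; rewrite /P2 => ->; rewrite Ho andbT /=; apply/eqP; lia.
  + rewrite mem_PP in Ht; case/and4P: Ht => Hp tn /eqP Hpe Ho.
    rewrite isp_rcons isp_add // (isp_sorted Hp) last_add_ge // rcons_nnil.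
    rewrite perim_rcons ?map_nnil // perim_add // Hpe.
    have := P2_rcons_new (notin_add 1 (isp_pos Hp)); rewrite /P2 => ->.
    have := P2_add1 t; rewrite /P2 => ->; rewrite Ho andbT /=; apply/eqP; lia.
  + by case/and4P => -> -> -> /andP[HP _].
Qed.

Lemma C_dec M : 4 <= M -> perm_eq (Cset M)
  ([seq rcons t 1 | t <- Cset M.-1] ++ [seq rcons (rcons (map (addn 1) t) 1) 1 | t <- Hset (M - 3)]).
Proof.
move=> HM; apply: uniq_perm; first exact: PP_uniq.
  apply: (@uniq_cat2 _ _ _ (fun s : seq nat => 2 < count_mem 1 s)).
  - rewrite map_inj_uniq ?PP_uniq //; exact: rcons_injl.
  - rewrite map_inj_uniq ?PP_uniq // => x1 x2 E; apply: (inj_map (@addnI 1)).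
    apply: (rcons_injl 1); apply: (rcons_injl 1); exact: E.
  - apply/allP => _ /mapP[t Ht ->]; rewrite mem_PP in Ht; case/and4P: Ht => _ _ _ /andP[_ Hl].
    by rewrite /= count_rcons2 eqxx addn1 ltnS.
  - apply/allP => _ /mapP[t Ht ->]; rewrite mem_PP in Ht; case/and4P: Ht => Hp _ _ _.
    rewrite /= !count_rcons2 eqxx.
    by move/count_memPn: (notin_add 1 (isp_pos Hp)) => ->.
move=> s; rewrite mem_cat /Cset /Hset !mem_PP; apply/idP/idP.
- case/and4P => Hs Hn /eqP Hper /andP[HP Hc].
  have H1s : 1 \in s by apply/count_memPn => E; rewrite E in Hc.
  have [t Et] := last1 Hs H1s; subst s.
  move: Hs; rewrite isp_rcons => /and3P[Ht _ Hyl].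
  move: Hc; rewrite count_rcons2 eqxx addn1 ltnS => Hc.
  have H1t : 1 \in t by apply/count_memPn => E; rewrite E in Hc.
  have tn : t != [::] by apply/eqP => Et; rewrite Et in H1t.
  have Per : perimeter t = M.-1 by move: Hper; rewrite perim_rcons // => <-.
  case: (eqVneq (count_mem 1 t) 1) => Hc1; last first.
    apply/orP; left; apply: map_f; rewrite mem_PP Ht tn Per eqxx /=.
    have := @P2_rcons_rep t 1 H1t Hc1; rewrite /P2 => <-.
    apply/andP; split; first exact: HP.
    by move: Hc Hc1; case: (count_mem 1 t) => [|[|]].
  have [t' Et'] := last1 Ht H1t; subst t.
  move: Hc1; rewrite count_rcons2 eqxx addn1 => /eqP; rewrite eqSS => /eqP/count_memPn H1t'.
  move: Ht; rewrite isp_rcons => /and3P[Ht' _ _].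
  have tn' : t' != [::] by apply/eqP => Et; move: Hper HM; rewrite Et => <-.
  have Ht1 : all (fun x => 1 < x) t'.
    apply/allP => x xt; have := last_min 0 (isp_sorted Ht') xt.
    have := allP (isp_pos Ht') x xt; rewrite leq_eqVlt; case/orP => // /eqP E.
    by move: H1t'; rewrite E xt.
  have [u Eu Hu] := add_split (erefl : 0 < 1) Ht' Ht1.
  apply/orP; right; rewrite Eu; apply: map_f.
  have un : u != [::] by rewrite -(map_nnil (addn 1)) -Eu.
  rewrite mem_PP Hu un -(map_inj_uniq (@addnI 1)) -Eu -(P2_C2 H1t') HP andbT /=.
  move: Hper; rewrite !perim_rcons ?rcons_nnil // Eu perim_add // => <-.
  by apply/eqP; lia.
- case/orP => /mapP[t Ht ->]; rewrite mem_PP in Ht.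
    case/and4P: Ht => Hp tn /eqP Hpe /andP[HP Hc].
    have H1t : 1 \in t by apply/count_memPn => E; rewrite E in Hc.
    rewrite isp_rcons Hp last_pos // rcons_nnil perim_rcons // Hpe.
    have := @P2_rcons_rep t 1 H1t; rewrite /P2 => ->; last by move: Hc; case: (count_mem 1 t) => [|[|]].
    rewrite -/(P2 t) HP count_rcons2 eqxx addn1; apply/and5P; split=> //; [apply/eqP|]; lia.
  case/and4P: Ht => Hp tn /eqP Hpe Hu.
  rewrite !isp_rcons isp_add // (isp_sorted Hp) last_add_ge // last_rcons rcons_nnil.
  rewrite !perim_rcons ?rcons_nnil ?map_nnil // perim_add // Hpe.
  have H1 := notin_add 1 (isp_pos Hp).
  have := P2_C2 H1; rewrite /P2 => ->; rewrite (map_inj_uniq (@addnI 1)) Hu.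
  rewrite !count_rcons2 eqxx; move/count_memPn: H1 => ->; rewrite /= andbT; apply/eqP; lia.
Qed.

Definition a_ M := size (Gset M).
Definition b_ M := size (Hset M).
Definition e_ M := size (Eset M).
Definition c_ M := size (Cset M).

Lemma base1 : [/\ a_ 1 = 1, a_ 2 = 1, b_ 1 = 1 & b_ 2 = 1].
Proof. by vm_compute. Qed.
Lemma base2 : [/\ e_ 2 = 1, e_ 3 = 1, c_ 2 = 1 & c_ 3 = 1].
Proof. by vm_compute. Qed.
Lemma base3 : [/\ g 1 = 1, g 2 = 2, h 1 = 1 & h 2 = 1].
Proof. by vm_compute. Qed.
Lemma base4 : [/\ g1 1 = 0, g1 2 = 1, h1 1 = 0 & h1 2 = 1].
Proof. by vm_compute. Qed.

Lemma a_rec m : a_ m.+3 = a_ m.+2 + a_ m.+1.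
Proof. by rewrite /a_ (perm_size (G_dec _)) // size_cat !size_map. Qed.

Lemma b_rec m : b_ m.+3 = b_ m.+2 + b_ m.+1.
Proof. by rewrite /b_ (perm_size (H_dec _)) // size_cat !size_map. Qed.

Lemma e_rec m : e_ m.+4 = e_ m.+3 + a_ m.+1.
Proof.
rewrite /e_ (perm_size (E_dec _)) // size_cat !size_map.
by have -> : m.+4 - 3 = m.+1 by lia.
Qed.

Lemma c_rec m : c_ m.+4 = c_ m.+3 + b_ m.+1.
Proof.
rewrite /c_ (perm_size (C_dec _)) // size_cat !size_map.
by have -> : m.+4 - 3 = m.+1 by lia.
Qed.

Lemma g1_rec m : g1 m.+3 = g1 m.+2 + g1 m.+1 + e_ m.+3.
Proof. by rewrite /g1 (perm_size (G1_dec _)) // !size_cat !size_map addnA. Qed.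

Lemma h1_rec m : h1 m.+3 = h1 m.+2 + h1 m.+1 + c_ m.+3.
Proof. by rewrite /h1 (perm_size (H1_dec _)) // !size_cat !size_map addnA. Qed.

Lemma g_rec m : g m.+3 = g m.+2 + a_ m.+2 + g m.+1.
Proof.
rewrite /g (perm_sumn (perm_map size (G_dec _))) // map_cat sumn_cat.
by rewrite sumn_size_rcons sumn_size_map.
Qed.

Lemma h_rec m : h m.+3 = h m.+2 + h m.+1 + b_ m.+1.
Proof.
rewrite /h (perm_sumn (perm_map size (H_dec _))) // map_cat sumn_cat.
by rewrite sumn_size_rcons_map sumn_size_map addnA.
Qed.

Fixpoint cv n := match n with 0 => 0 | 1 => 0 | (m.+1 as k).+1 => cv k + cv m + fib k end.

Lemma a_fib m : a_ m.+1 = fib m.+1 /\ a_ m.+2 = fib m.+2.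
Proof.
elim: m => [|m [IH1 IH2]]; first by case: base1.
by split => //; rewrite a_rec IH1 IH2.
Qed.

Lemma b_fib m : b_ m.+1 = fib m.+1 /\ b_ m.+2 = fib m.+2.
Proof.
elim: m => [|m [IH1 IH2]]; first by case: base1.
by split => //; rewrite b_rec IH1 IH2.
Qed.

Lemma e_fib m : e_ m.+2 = fib m.+1 /\ e_ m.+3 = fib m.+2.
Proof.
elim: m => [|m [IH1 IH2]]; first by case: base2.
split => //; rewrite e_rec IH2 (a_fib m).1 /=; lia.
Qed.

Lemma c_fib m : c_ m.+2 = fib m.+1 /\ c_ m.+3 = fib m.+2.
Proof.
elim: m => [|m [IH1 IH2]]; first by case: base2.
split => //; rewrite c_rec IH2 (b_fib m).1 /=; lia.
Qed.

Lemma g1_cv m : g1 m.+1 = cv m.+1 /\ g1 m.+2 = cv m.+2.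
Proof.
elim: m => [|m [IH1 IH2]]; first by case: base4.
split => //; rewrite g1_rec IH1 IH2 (e_fib m).2 /=; lia.
Qed.

Lemma h1_cv m : h1 m.+1 = cv m.+1 /\ h1 m.+2 = cv m.+2.
Proof.
elim: m => [|m [IH1 IH2]]; first by case: base4.
split => //; rewrite h1_rec IH1 IH2 (c_fib m).2 /=; lia.
Qed.

Lemma g_cv m : g m.+1 = fib m.+1 + cv m.+1 /\ g m.+2 = fib m.+2 + cv m.+2.
Proof.
elim: m => [|m [IH1 IH2]]; first by case: base3.
split => //; rewrite g_rec IH1 IH2 (a_fib m).2 /=; lia.
Qed.

Lemma h_cv m : h m.+1 = fib m.+1 + cv m /\ h m.+2 = fib m.+2 + cv m.+1.
Proof.
elim: m => [|m [IH1 IH2]]; first by case: base3.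
split => //; rewrite h_rec IH1 IH2 (b_fib m).1.
case: m {IH1 IH2} => [|m] /=; lia.
Qed.

Definition S_ n := \sum_(1 <= k < n) fib k * fib (n - k).

Lemma S_rec m : S_ m.+2 = S_ m.+1 + S_ m + fib m.+1.
Proof.
rewrite /S_ big_nat_recr //= subSnn muln1.
rewrite (eq_big_nat _ _ (F2 := fun k => fib k * fib (m.+1 - k) + fib k * fib (m - k))); last first.
  move=> k /andP[_ km]; rewrite -mulnDr; congr (_ * _).
  have -> : m.+2 - k = (m - k).+2 by lia.
  have -> : m.+1 - k = (m - k).+1 by lia.
  by [].
rewrite big_split /=; congr (_ + _ + _).
case: m => [|m]; first by rewrite !big_geq.
by rewrite big_nat_recr //= subnn muln0 addn0.
Qed.

Lemma cv_S m : cv m = S_ m /\ cv m.+1 = S_ m.+1.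
Proof.
elim: m => [|m [IH1 IH2]]; first by rewrite /S_ !big_geq.
by split => //; rewrite S_rec -IH1 -IH2.
Qed.

Lemma subZ (x y d : nat) : x = (y + d)%N -> (x%:Z - y%:Z = d%:Z)%R.
Proof. by move->; rewrite PoszD GRing.addrC GRing.addKr. Qed.

Local Open Scope ring_scope.

Theorem mainTheorem6 (M : nat) (hM : (2 <= M)%N) :
  [/\ g M = (fib M + \sum_(1 <= k < M) fib k * fib (M - k))%N,
      h M = (fib M + \sum_(1 <= k < M.-1) fib k * fib (M.-1 - k))%N,
      g1 M = (\sum_(1 <= k < M) fib k * fib (M - k))%N /\
      h1 M = (\sum_(1 <= k < M) fib k * fib (M - k))%N &
      let d := (fib M.-1 + \sum_(1 <= k < M - 2) fib k * fib (M - 2 - k))%N in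
      [/\ (g M)%:Z - (h M)%:Z = d%:Z,
          (g1 M)%:Z - (g1 M.-1)%:Z = d%:Z &
          (h1 M)%:Z - (h1 M.-1)%:Z = d%:Z]].
Proof.
move: hM; case: M => [|[|m]] // _.
have eS : forall n, cv n = S_ n := fun n => (cv_S n).1.
split.
- by rewrite (g_cv m).2 eS.
- by rewrite (h_cv m).2 eS.
- by rewrite (g1_cv m).2 (h1_cv m).2 !eS.
move=> d.
have Ed : d = (fib m.+1 + S_ m)%N.
  by rewrite /d /S_; have -> : (m.+2 - 2 = m)%N by lia.
have ES := S_rec m.
rewrite Ed; split; apply: subZ.
- rewrite (g_cv m).2 (h_cv m).2 !eS ES; lia.
- rewrite (g1_cv m).2 (g1_cv m).1 !eS ES /=; lia.
- rewrite (h1_cv m).2 (h1_cv m).1 !eS ES /=; lia.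
Qed.
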